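(* Let $n\ge2$, let $\mathbb{K}$ be a field of characteristic not $2,3$ containing a primitive $n$-th root of unity $\epsilon_n$, and let $\mathscr{C}_n=\mathbb{K}[z]/(z^n-1)$ with multiplication $p(z)\circ q(z)=p(\epsilon_nz)q(\epsilon_nz)\mod z^n-1$. Let $\Delta(p)=p(1)p(\epsilon_n)\cdots p(\epsilon_n^{n-1})$. If $p$ is a nonzero idempotent of $(\mathscr{C}_n,\circ)$ with $p\not\equiv1$, then $\Delta(p)=1$, and the set of distinct eigenvalues of $L^\circ_p:q\mapsto p\circ q$ is exactly $\{\epsilon_n^i:0\le i\le n-1\}$. In particular, every nonzero idempotent of $\mathscr{C}_n$ is semi-simple.
   Context: An idempotent $p$ is semi-simple if $\mathscr{C}_n$ is the direct sum of the eigenspaces of $L^\circ_p$. *)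

(* Defs.v *)
From HB Require Import structures.
From mathcomp Require Import all_boot all_order all_algebra.
Set Implicit Arguments. Unset Strict Implicit. Unset Printing Implicit Defensive.
Import Order.TTheory GRing.Theory Num.Theory.
Local Open Scope ring_scope.

(* The algebra C_n = K[z]/(z^n - 1) is represented by its canonical
   representatives: polynomials p : {poly K} with size p <= n
   (i.e. degree < n).  *)

Definition inCn (K : fieldType) (n : nat) (p : {poly K}) : Prop := (size p <= n)%N.

Definition circ (K : fieldType) (n : nat) (eps : K) (p q : {poly K}) : {poly K} :=
  ((p \Po (eps *: 'X)) * (q \Po (eps *: 'X))) %% ('X^n - 1).

Definition Delta (K : fieldType) (n : nat) (eps : K) (p : {poly K}) : K :=
  \prod_(i < n) p.[eps ^+ i].

Definition eigval (K : fieldType) (n : nat) (eps : K) (p : {poly K}) (l : K) : Prop :=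
  exists q : {poly K}, [/\ inCn n q, q != 0 & circ n eps p q = l *: q].

Definition semisimple (K : fieldType) (n : nat) (eps : K) (p : {poly K}) : Prop :=
  exists s : seq K, uniq s /\
    (forall q, inCn n q ->
       exists v : nat -> {poly K},
         (forall j, (j < size s)%N -> inCn n (v j) /\ circ n eps p (v j) = s`_j *: v j) /\
         q = \sum_(j < size s) v j) /\
    (forall v : nat -> {poly K},
       (forall j, (j < size s)%N -> inCn n (v j) /\ circ n eps p (v j) = s`_j *: v j) ->
       \sum_(j < size s) v j = 0 -> forall j, (j < size s)%N -> v j = 0).

(* Main.v *)
Require Import Defs.
From HB Require Import structures.
From mathcomp Require Import all_boot all_order all_algebra.
Import Order.TTheory GRing.Theory Num.Theory.
Local Open Scope ring_scope.
Set Implicit Arguments. Unset Strict Implicit.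

Section Basic.
Variables (K : fieldType) (n : nat) (eps : K).
Hypothesis heps : n.-primitive_root eps.
Hypothesis hn : (0 < n)%N.

Lemma eps_n : eps ^+ n = 1. Proof. exact: prim_expr_order heps. Qed.
Lemma epsE k : eps ^+ (k + n) = eps ^+ k.
Proof. by rewrite exprD eps_n mulr1. Qed.

Lemma root_Xn k : ('X^n - 1 : {poly K}).[eps ^+ k] = 0.
Proof.
by rewrite hornerD hornerN hornerXn hornerC -exprM mulnC exprM eps_n expr1n subrr.
Qed.

Lemma horner_mod r k : (r %% ('X^n - 1)).[eps ^+ k] = r.[eps ^+ k].
Proof.
by rewrite {2}(divp_eq r ('X^n - 1)) hornerD hornerM root_Xn mulr0 add0r.
Qed.

Lemma circ_eval p q k :
  (circ n eps p q).[eps ^+ k] = p.[eps ^+ k.+1] * q.[eps ^+ k.+1].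
Proof.
by rewrite /circ horner_mod hornerM !horner_comp hornerZ hornerX -exprS.
Qed.

Lemma circ_size p q : inCn n (circ n eps p q).
Proof.
rewrite /inCn /circ -ltnS -(size_Xn_sub_1 K hn) ltn_modp.
by rewrite -size_poly_eq0 size_Xn_sub_1.
Qed.

Lemma eps_inj i j : (i < n)%N -> (j < n)%N -> eps ^+ i = eps ^+ j -> i = j.
Proof.
move=> hi hj /eqP; rewrite (eq_prim_root_expr heps) !modn_small //.
by move/eqP.
Qed.

Lemma inj0 q : inCn n q -> (forall k, (k < n)%N -> q.[eps ^+ k] = 0) -> q = 0.
Proof.
move=> hq hz; apply/eqP; apply: contraT => q0.
have := max_poly_roots q0 (rs := [seq eps ^+ k | k <- iota 0 n]).
rewrite size_map size_iota => h.
have : (n < n)%N.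
  apply: leq_trans hq; apply: h.
    apply/allP => x /mapP [k]; rewrite mem_iota add0n => /andP[_ hk] ->.
    by apply/rootP; apply: hz.
  rewrite map_inj_in_uniq ?iota_uniq // => i j; rewrite !mem_iota !add0n.
  by move=> /andP[_ hi] /andP[_ hj]; apply: eps_inj.
by rewrite ltnn.
Qed.

Definition Lk (k : nat) : {poly K} :=
  \prod_(j <- rem k (iota 0 n)) ('X - (eps ^+ j)%:P).

Lemma Lk_size k : (k < n)%N -> size (Lk k) = n.
Proof.
move=> hk; rewrite /Lk size_prod_XsubC size_rem ?size_iota.
  by rewrite prednK.
by rewrite mem_iota add0n.
Qed.

Lemma Lk_eval k m : (k < n)%N -> (m < n)%N -> m != k -> (Lk k).[eps ^+ m] = 0.
Proof.
move=> hk hm hmk; rewrite /Lk horner_prod (big_rem m).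
  by rewrite /= hornerXsubC subrr mul0r.
by rewrite mem_rem_uniq ?iota_uniq // inE hmk mem_iota add0n.
Qed.

Lemma Lk_neq0 k : (k < n)%N -> (Lk k).[eps ^+ k] != 0.
Proof.
move=> hk; rewrite /Lk horner_prod prodf_seq_neq0; apply/allP => j.
rewrite mem_rem_uniq ?iota_uniq // inE mem_iota add0n => /andP[hjk /andP[_ hj]].
rewrite hornerXsubC subr_eq0; apply/eqP => /(eps_inj hk hj) e.
by rewrite e eqxx in hjk.
Qed.

Definition lag (f : nat -> K) : {poly K} :=
  \sum_(k < n) (f k / (Lk k).[eps ^+ k]) *: Lk k.

Lemma size_sumCn (m : nat) (F : 'I_m -> {poly K}) :
  (forall i, inCn n (F i)) -> inCn n (\sum_(i < m) F i).
Proof.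
move=> h; apply: (big_ind (fun p => inCn n p)) => //.
  by rewrite /inCn size_poly0.
move=> x y; rewrite /inCn => hx hy.
by apply: leq_trans (size_polyD _ _) _; rewrite geq_max hx hy.
Qed.

Lemma lag_size f : inCn n (lag f).
Proof.
apply: size_sumCn => i; rewrite /inCn.
by apply: leq_trans (size_scale_leq _ _) _; rewrite Lk_size.
Qed.

Lemma lag_eval f m : (m < n)%N -> (lag f).[eps ^+ m] = f m.
Proof.
move=> hm; rewrite /lag horner_sum (bigD1 (Ordinal hm)) //= big1.
  by rewrite addr0 hornerZ mulfVK // Lk_neq0.
move=> i hi; rewrite hornerZ (@Lk_eval i m (ltn_ord i) hm) ?mulr0 //.
by apply: contra hi => /eqP e; apply/eqP/val_inj => /=; rewrite e.
Qed.

End Basic.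

Section Idem.
Variables (K : fieldType) (n : nat) (eps : K).
Hypothesis heps : n.-primitive_root eps.
Hypothesis hn : (0 < n)%N.
Variable p : {poly K}.
Hypotheses (hp : inCn n p) (hid : circ n eps p p = p) (hp0 : p != 0).

Let a i := p.[eps ^+ i].

Lemma a_rel k : a k = a k.+1 ^+ 2.
Proof. by rewrite /a -{1}hid (circ_eval heps) expr2. Qed.

Lemma a_per k : a (k + n) = a k.
Proof. by rewrite /a epsE. Qed.

Lemma shift_prod (f : nat -> K) : (forall i, f (i + n) = f i) ->
  forall s, \prod_(i < n) f (s + i)%N = \prod_(i < n) f i.
Proof.
move=> hf; elim=> [|s IH]; first by apply: eq_bigr => i _; rewrite add0n.
rewrite -IH; case: n hn hf {IH} => // n' _ hf.
rewrite big_ord_recr big_ord_recl /= addn0 mulrC; congr (_ * _).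
  by rewrite addSnnS hf.
by apply: eq_bigr => i _; rewrite /bump /= add1n addSnnS.
Qed.

Lemma a_neq0 k : a k != 0.
Proof.
apply/negP => /eqP hk.
have h : forall d j, (j + d = k + n)%N -> a j = 0.
  elim=> [|d IH] j hj; first by rewrite addn0 in hj; rewrite hj a_per.
  by rewrite a_rel (IH j.+1) ?expr0n // addSnnS.
move/negP: hp0; apply; apply/eqP; apply: (inj0 heps hp) => j hj.
by apply: (h (k + n - j)%N); rewrite subnKC // ltnW // ltn_addl.
Qed.

Lemma Delta1 : Delta n eps p = 1.
Proof.
have hD : Delta n eps p = Delta n eps p ^+ 2.
  rewrite /Delta; transitivity (\prod_(i < n) a (1 + i)%N ^+ 2).
    by apply: eq_bigr => i _; rewrite add1n -a_rel.
  by rewrite prodrXl (shift_prod (f := fun i => a i) a_per 1).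
have : Delta n eps p != 0.
  by rewrite /Delta; apply/prodf_neq0 => i _; apply: a_neq0.
move: hD; set D := Delta n eps p => hD D0.
by apply: (mulIf D0); rewrite mul1r -expr2 -hD.
Qed.

Definition Pk k := \prod_(k.+1 <= i < n.+1) a i.
Definition W (l : K) k := l ^+ k * Pk k.

Lemma W_rel l k : (k < n)%N -> a k.+1 * W l k.+1 = l * W l k.
Proof.
move=> hk; rewrite /W /Pk (@big_ltn _ _ _ k.+1 n.+1) // exprS.
by rewrite mulrA mulrCA [l * _]mulrC !mulrA.
Qed.

Lemma Pk0 : Pk 0 = 1.
Proof.
rewrite /Pk big_add1 /= big_mkord.
transitivity (\prod_(i < n) a (1 + i)%N).
  by apply: eq_bigr => i _; rewrite add1n.
by rewrite (shift_prod (f := fun i => a i) a_per 1); exact: Delta1.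
Qed.

Lemma W0 l : W l 0 = 1.
Proof. by rewrite /W expr0 mul1r Pk0. Qed.

Lemma Wn l : l ^+ n = 1 -> W l n = 1.
Proof. by move=> hl; rewrite /W /Pk big_geq // hl mulr1. Qed.

Lemma Pk_neq0 k : Pk k != 0.
Proof.
rewrite /Pk; apply: (big_ind (fun x => x != 0)); first exact: oner_neq0.
  by move=> x y; apply: mulf_neq0.
by move=> i _; exact: a_neq0.
Qed.

Lemma eigE q l : inCn n q -> (circ n eps p q = l *: q <->
  forall k, (k < n)%N -> a k.+1 * q.[eps ^+ k.+1] = l * q.[eps ^+ k]).
Proof.
move=> hq; split.
  by move=> e k _; rewrite -(circ_eval heps) e hornerZ.
move=> h; apply/eqP; rewrite -subr_eq0; apply/eqP.
apply: (inj0 heps).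
  rewrite /inCn; apply: leq_trans (size_polyD _ _) _.
  by rewrite geq_max size_polyN (circ_size eps hn) (leq_trans (size_scale_leq _ _)).
by move=> k hk; rewrite hornerD hornerN (circ_eval heps) hornerZ h // subrr.
Qed.

Definition e l := lag n eps (W l).

Lemma e_eval l m : l ^+ n = 1 -> (m <= n)%N -> (e l).[eps ^+ m] = W l m.
Proof.
move=> hl; rewrite leq_eqVlt => /orP [/eqP ->|hm]; last by rewrite lag_eval.
by rewrite Wn // (prim_expr_order heps) -(expr0 eps) lag_eval // W0.
Qed.

Lemma e_eig l : l ^+ n = 1 -> circ n eps p (e l) = l *: e l.
Proof.
move=> hl; apply/eigE; first exact: lag_size.
by move=> k hk; rewrite !e_eval // ?W_rel // ltnW.
Qed.

Lemma e_neq0 l : l ^+ n = 1 -> e l != 0.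
Proof.
move=> hl; apply/eqP => h; have := e_eval hl (leq0n n).
by rewrite h horner0 W0 => /eqP; rewrite eq_sym oner_eq0.
Qed.

Lemma l_neq0 (l : K) : l ^+ n = 1 -> l != 0.
Proof.
move=> hl; apply/eqP => l0; move: hl; rewrite l0 expr0n.
by case: n hn => // m _ /= /eqP; rewrite eq_sym oner_eq0.
Qed.

Lemma eig_uniq q l : l ^+ n = 1 -> inCn n q -> circ n eps p q = l *: q ->
  q = q.[1] *: e l.
Proof.
move=> hl hq /(eigE _ hq) h.
have hb : forall d, (d <= n)%N -> q.[eps ^+ (n - d)] = q.[1] * W l (n - d).
  elim=> [|d IH] hd; first by rewrite subn0 Wn // mulr1 (prim_expr_order heps).
  have hk : (n - d.+1 < n)%N by rewrite ltn_subrL hn.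
  have e1 : (n - d.+1).+1 = (n - d)%N by rewrite subnSK.
  apply: (mulfI (l_neq0 hl)); rewrite [RHS]mulrCA -(h _ hk) -(W_rel _ hk) e1.
  by rewrite (IH (ltnW hd)) mulrCA.
apply/eqP; rewrite -subr_eq0; apply/eqP; apply: (inj0 heps).
  rewrite /inCn; apply: leq_trans (size_polyD _ _) _.
  by rewrite geq_max size_polyN hq (leq_trans (size_scale_leq _ _)) // lag_size.
move=> k hk; rewrite hornerD hornerN hornerZ (e_eval hl (ltnW hk)).
have := hb (n - k)%N (leq_subr _ _); rewrite (subKn (ltnW hk)) => ->.
by rewrite subrr.
Qed.

End Idem.

Section Main.
Variables (K : fieldType) (n : nat) (eps : K).
Hypothesis heps : n.-primitive_root eps.
Hypothesis hn : (0 < n)%N.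
Variable p : {poly K}.
Hypotheses (hp : inCn n p) (hid : circ n eps p p = p) (hp0 : p != 0).

Lemma rootn i : (eps ^+ i) ^+ n = 1.
Proof. by rewrite exprAC (prim_expr_order heps) expr1n. Qed.

Lemma eig_fwd l : eigval n eps p l -> exists i : 'I_n, l = eps ^+ i.
Proof.
case=> q [hq q0 hc].
have hrel k : p.[eps ^+ k.+1] * q.[eps ^+ k.+1] = l * q.[eps ^+ k].
  by rewrite -(circ_eval heps) hc hornerZ.
have [k0 qk0] : exists k0, q.[eps ^+ k0] != 0.
  case: (boolP [exists k : 'I_n, q.[eps ^+ k] != 0]) => [/existsP [k hk]|/existsPn hall].
    by exists k.
  by move: q0; rewrite (inj0 heps hq) ?eqxx // => k hk; apply/eqP; move: (hall (Ordinal hk)); rewrite negbK.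
have hm m : l ^+ m * q.[eps ^+ k0] =
    (\prod_(i < m) p.[eps ^+ (k0 + i).+1]) * q.[eps ^+ (k0 + m)].
  elim: m => [|m IH]; first by rewrite expr0 mul1r big_ord0 mul1r addn0.
  rewrite exprSr mulrAC IH -mulrA [_ * l]mulrC -hrel addnS.
  by rewrite big_ord_recr /= mulrA.
have hln : l ^+ n = 1.
  apply: (mulIf qk0); rewrite mul1r hm (epsE heps).
  have -> : \prod_(i < n) p.[eps ^+ (k0 + i).+1] = 1.
    transitivity (\prod_(i < n) p.[eps ^+ (k0.+1 + i)]).
      by apply: eq_bigr => i _; rewrite addSn.
    rewrite (shift_prod hn (f := fun i => p.[eps ^+ i])).
      exact: (Delta1 heps hn hp hid hp0).
    by move=> i; rewrite (epsE heps).
  by rewrite mul1r.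
by case: (prim_rootP heps hln) => i ->; exists i.
Qed.

Lemma eig_bwd (i : 'I_n) : eigval n eps p (eps ^+ i).
Proof.
exists (e n eps p (eps ^+ i)); split.
- exact: lag_size.
- exact: (e_neq0 heps hn hp hid hp0 (rootn i)).
- exact: (e_eig heps hn hp hid hp0 (rootn i)).
Qed.


Lemma ss : semisimple n eps p.
Proof.
pose s := [seq eps ^+ i | i <- iota 0 n].
have ss_size : size s = n by rewrite size_map size_iota.
have snth j : (j < n)%N -> s`_j = eps ^+ j.
  by move=> hj; rewrite (nth_map 0%N) ?size_iota // nth_iota // add0n.
have eigZ c j : (j < n)%N ->
    circ n eps p (c *: e n eps p (eps ^+ j)) = eps ^+ j *: (c *: e n eps p (eps ^+ j)).
  move=> hj.
  have hs : inCn n (c *: e n eps p (eps ^+ j)).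
    by rewrite /inCn (leq_trans (size_scale_leq _ _)) //; exact: lag_size.
  apply/(eigE heps hn p _ hs) => k hk.
  have := e_eig heps hn hp hid hp0 (rootn j).
  move/(eigE heps hn p _ (lag_size eps hn _)) => h.
  by rewrite !hornerZ mulrCA (h k hk) mulrCA.
have ev j k : (k < n)%N ->
    (e n eps p (eps ^+ j)).[eps ^+ k] = (eps ^+ k) ^+ j * Pk n eps p k.
  move=> hk; rewrite (e_eval heps hn hp hid hp0 (rootn j) (ltnW hk)) /W.
  by rewrite exprAC.
exists s; split; [|split].
- rewrite map_inj_in_uniq ?iota_uniq // => i j; rewrite !mem_iota !add0n.
  by move=> /andP[_ hi] /andP[_ hj]; exact: (eps_inj heps hi hj).
- move=> q hq.
  pose C := lag n eps (fun k => q.[eps ^+ k] / Pk n eps p k).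
  exists (fun j => C`_j *: e n eps p (eps ^+ j)); split.
    move=> j; rewrite ss_size => hj; split; last by rewrite snth // eigZ.
    by rewrite /inCn (leq_trans (size_scale_leq _ _)) //; exact: lag_size.
  rewrite ss_size.
  apply/eqP; rewrite -subr_eq0; apply/eqP; apply: (inj0 heps).
    rewrite /inCn; apply: leq_trans (size_polyD _ _) _.
    rewrite geq_max size_polyN hq /=; apply: size_sumCn => i.
    by rewrite /inCn (leq_trans (size_scale_leq _ _)) //; exact: lag_size.
  move=> k hk; rewrite hornerD hornerN horner_sum.
  under eq_bigr => j _ do rewrite hornerZ (ev j k hk) mulrA.
  rewrite -big_distrl /= -(horner_coef_wide _ (lag_size eps hn _)).
  by rewrite (lag_eval heps _ hk) divfK ?subrr // (Pk_neq0 heps hp hid hp0).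
- move=> v; rewrite ss_size => hv hsum j hj.
  have hvj i : (i < n)%N -> v i = (v i).[1] *: e n eps p (eps ^+ i).
    move=> hi; have [h1 h2] := hv i hi.
    by apply: (eig_uniq heps hn hp hid hp0 (rootn i) h1); rewrite -snth.
  pose C := \poly_(i < n) (v i).[1].
  have C0 : C = 0.
    apply: (inj0 heps (size_poly _ _)) => k hk.
    have := congr1 (fun r => r.[eps ^+ k]) hsum; rewrite /= horner_sum horner0.
    under eq_bigr => i _ do rewrite (hvj i (ltn_ord i)) hornerZ (ev i k hk) mulrA.
    rewrite -big_distrl /= => /eqP; rewrite mulf_eq0 (negbTE (Pk_neq0 heps hp hid hp0 k)) orbF.
    by rewrite horner_poly => /eqP.
  have h0 : (v j).[1] = 0.
    have := coef_poly n (fun i => (v i).[1]) j; rewrite hj -/C C0 coef0.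
    by move=> <-.
  by rewrite (hvj j hj) h0 scale0r.
Qed.

End Main.

Unset Implicit Arguments. Set Strict Implicit.

Theorem proposition7p2 (K : fieldType) (n : nat) (eps : K)
  (hn : (2 <= n)%N)
  (hc2 : (2 \notin [pchar K])%N) (hc3 : (3 \notin [pchar K])%N)
  (heps : n.-primitive_root eps) :
  (forall p : {poly K}, inCn n p -> circ n eps p p = p -> p != 0 -> p != 1 ->
     Delta n eps p = 1 /\
     (forall l : K, eigval n eps p l <-> exists i : 'I_n, l = eps ^+ i))
  /\
  (forall p : {poly K}, inCn n p -> circ n eps p p = p -> p != 0 ->
     semisimple n eps p).
Proof.
have hn0 : (0 < n)%N by apply: leq_trans hn.
split.
  move=> p hp hid hp0 _; split; first exact: (Delta1 heps hn0 hp hid hp0).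
  move=> l; split; first exact: (eig_fwd heps hn0 hp hid hp0).
  by case=> i ->; exact: (eig_bwd heps hn0 hp hid hp0).
by move=> p hp hid hp0; exact: (ss heps hn0 hp hid hp0).
Qed.
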